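(* Let $N = n+1 \ge 4$ be even. The height function $\omega: S_{C_N} \to \mathbb{Z}$ given by $\omega(\mathbf{0}) = 0$, $\omega(\pm \mathbf{e}_1) = 2$, and $\omega(\mathbf{a}) = 1$ for all other $\mathbf{a}\in S_{C_N}$ induces a regular unimodular triangulation $\Delta_N$ of the point configuration $S_{C_N}$ (whose convex hull is $P_{C_N}$). Specifically, \[ \Delta_N = \bigcup_{\boldsymbol{\lambda} \in \Lambda_N} \Delta_+(G^{\mathbf{0}}_{\boldsymbol{\lambda}}). \]
   Context: $\mathbf{e}_1,\dots,\mathbf{e}_n$ is the standard basis of $\mathbb{R}^n$, with the convention $\mathbf{e}_0 = \mathbf{e}_N = \mathbf{0}$. The cycle graph $C_N$ has vertices $0,\dots,N-1$ and edges $\{0,1\},\dots,\{N-2,N-1\},\{N-1,0\}$. The adjacency polytope is $P_{C_N} = \operatorname{conv}\{\mathbf{e}_i - \mathbf{e}_j \mid \{i,j\} \text{ an edge of } C_N\}$ (both orientations), and $S_{C_N} = \{\mathbf{0}\}\cup\{\mathbf{e}_i - \mathbf{e}_j \mid \{i,j\} \text{ an edge}\}$. For even $N$, $\Lambda_N = \{(\lambda_1,\dots,\lambda_N)\in\{-1,1\}^N \mid \sum_i\lambda_i = 0\}$. For $\boldsymbol{\lambda}\in\Lambda_N$, set $\mathbf{v}_0=\mathbf{0}$, $\mathbf{v}_i = \lambda_i(\mathbf{e}_{i-1}-\mathbf{e}_i)$ ($1\le i\le N$), $V_N = \{\mathbf{v}_0,\dots,\mathbf{v}_N\}$, $G^{\mathbf{0}}_{\boldsymbol{\lambda}}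 = \operatorname{conv}V_N$, and $\Delta_+(G^{\mathbf{0}}_{\boldsymbol{\lambda}}) = \{\operatorname{conv}(V_N\setminus\{\mathbf{v}_i\}) \mid 1\le i\le N,\ \lambda_i = \lambda_1\}$. The regular subdivision induced by $\omega$ is the set of projections to $\mathbb{R}^n$ of the lower facets (facets with inner normal having positive last coordinate) of $\operatorname{conv}\{(\mathbf{a},\omega(\mathbf{a})) \mid \mathbf{a}\in S_{C_N}\}$. A triangulation is unimodular if every simplex is a lattice simplex of normalized volume $1$ (i.e., $n!$ times its Euclidean volume equals $1$), and it is a triangulation of the point configuration $S_{C_N}$ if all simplices have vertices in $S_{C_N}$. *)

(* Defs.v *)
From HB Require Import structures.
From mathcomp Require Import all_boot all_order all_algebra.
From mathcomp Require Import reals.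
Set Implicit Arguments. Unset Strict Implicit. Unset Printing Implicit Defensive.
Import Order.TTheory GRing.Theory Num.Theory.
Local Open Scope ring_scope.

Section Defs.
Variable R : realType.
Variable n : nat.
Local Notation N := n.+1.
Local Notation vec := 'rV[R]_n.

(* standard basis e_1..e_n of R^n, with e_0 = e_N = 0 (and e_i = 0 for i > n) *)
Definition ebasis (i : nat) : vec :=
  if (0 < i)%N && (i <= n)%N then \row_(j < n) (if (j : nat) == i.-1 then 1 else 0)
  else 0.

Definition cycle_edge (i j : nat) : bool :=
  [&& (i < N)%N, (j < N)%N & (j == (i.+1 %% N)%N) || (i == (j.+1 %% N)%N)].

Definition S_CN (a : vec) : Prop :=
  a = 0 \/ exists i j : nat, cycle_edge i j /\ a = ebasis i - ebasis j.

Definition dotv (c a : vec) : R := \sum_(k < n) c 0 k * a 0 k.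

Definition conv (X : vec -> Prop) : vec -> Prop := fun x =>
  exists (k : nat) (p : 'I_k -> vec) (w : 'I_k -> R),
    (forall i, X (p i)) /\ (forall i, 0 <= w i) /\ \sum_(i < k) w i = 1 /\
    x = \sum_(i < k) w i *: p i.

Definition P_CN : vec -> Prop :=
  conv (fun a => exists i j : nat, cycle_edge i j /\ a = ebasis i - ebasis j).

Definition omega (a : vec) : R :=
  if a == 0 then 0
  else if (a == ebasis 1) || (a == - ebasis 1) then 2 else 1.

Definition diffmx (b : 'I_n.+1 -> vec) : 'M[R]_n :=
  \matrix_(i < n, k < n) (b (lift ord0 i) 0 k - b ord0 0 k).

(* F (a set of points) has affine dimension n: it contains n+1 affinely
   independent points *)
Definition full_dim (F : vec -> Prop) : Prop :=
  exists b : 'I_n.+1 -> vec, (forall i, F (b i)) /\ \det (diffmx b) != 0.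

(* A cell C (a subset of R^n) of the regular subdivision of S_{C_N} induced by
   omega: C is the projection of a lower facet of
   conv {(a, omega a) | a in S_{C_N}}, i.e. (normalizing the inner normal to
   (c, 1)) C = conv F where F is the set of points of S_{C_N} on which
   a |-> <c,a> + omega a attains its minimum h, and F has affine dimension n. *)
Definition regular_subdivision_cell (C : vec -> Prop) : Prop :=
  exists (c : vec) (h : R),
    (forall a, S_CN a -> h <= dotv c a + omega a) /\
    let F := fun a => S_CN a /\ dotv c a + omega a = h in
    full_dim F /\ (forall x, C x <-> conv F x).

Definition in_Lambda (lam : nat -> int) : Prop :=
  (forall i, (1 <= i <= N)%N -> lam i = 1 \/ lam i = -1) /\
  \sum_(1 <= i < N.+1) lam i = 0.

Definition vpt (lam : nat -> int) (i : nat) : vec :=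
  if i == 0%N then 0 else (lam i)%:~R *: (ebasis i.-1 - ebasis i).

Definition V_N (lam : nat -> int) : vec -> Prop :=
  fun x => exists j : nat, (j <= N)%N /\ x = vpt lam j.

Definition Delta_cell (C : vec -> Prop) : Prop :=
  exists lam : nat -> int, in_Lambda lam /\
  exists i : nat, [/\ (1 <= i <= N)%N, lam i = lam 1%N &
    forall x, C x <-> conv (fun y => V_N lam y /\ y <> vpt lam i) x].

(* C is a unimodular lattice simplex with vertices in S_{C_N}: the convex hull of
   n+1 points of S_{C_N} (lattice points) of normalized volume
   n! * vol = |det(b_1 - b_0, ..., b_n - b_0)| = 1 *)
Definition unimodular_simplex_in_S (C : vec -> Prop) : Prop :=
  exists b : 'I_n.+1 -> vec,
    (forall i, S_CN (b i)) /\ `|\det (diffmx b)| = 1 /\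
    (forall x, C x <-> conv (fun y => exists i, y = b i) x).

End Defs.

(* Main.v *)
Require Import Defs.
From HB Require Import structures.
From mathcomp Require Import all_boot all_order all_algebra.
From mathcomp Require Import reals.
From mathcomp Require Import zify ring lra.
From Stdlib Require Import Classical.
Set Implicit Arguments. Unset Strict Implicit. Unset Printing Implicit Defensive.
Import Order.TTheory GRing.Theory Num.Theory.
Local Open Scope ring_scope.

Lemma parity (s : nat -> int) a m :
  (forall k, (a <= k < a + m)%N -> s k = 1 \/ s k = -1) ->
  exists q : int, \sum_(a <= k < a + m) s k = m%:Z + 2 * q.
Proof.
elim: m => [|m IH] H.
  by exists 0; rewrite addn0 big_geq.
have [q Hq] : exists q : int, \sum_(a <= k < a + m) s k = m%:Z + 2 * q.
  by apply: IH => k /andP[k1 k2]; apply: H; rewrite k1 /=; apply: leq_trans k2 _; rewrite addnS.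
rewrite addnS big_nat_recr /= ?leq_addr // Hq.
have : (a <= a + m < a + m.+1)%N by rewrite leq_addr addnS ltnSn.
move=> /H [] ->; [exists q | exists (q - 1)]; lia.
Qed.

Lemma sum_swap1 (V : zmodType) (F G : nat -> V) a b i : (a <= i < b)%N ->
  (forall k, (a <= k < b)%N -> k != i -> F k = G k) ->
  \sum_(a <= k < b) F k = \sum_(a <= k < b) G k + (F i - G i).
Proof.
move=> /andP[ai ib] H.
rewrite !(big_cat_nat ai (ltnW ib)) /= !(big_ltn ib).
have E1 : \sum_(a <= k < i) F k = \sum_(a <= k < i) G k.
  apply: eq_big_nat => k /andP[k1 k2]; apply: H; first by rewrite k1 (ltn_trans k2).
  by rewrite ltn_eqF.
have E2 : \sum_(i.+1 <= k < b) F k = \sum_(i.+1 <= k < b) G k.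
  apply: eq_big_nat => k /andP[k1 k2]; apply: H; first by rewrite k2 andbT (leq_trans ai) // ltnW.
  by rewrite gtn_eqF.
rewrite E1 E2.
by rewrite -!addrA; congr (_ + _); rewrite addrCA [G i + _]addrC subrK addrC.
Qed.

Section Work.
Variable R : realType.
Variable n : nat.
Local Notation N := n.+1.
Local Notation vec := 'rV[R]_n.
Local Notation e := (ebasis R n).
Implicit Types (c a b d y : vec).

Lemma e_coord m (q : 'I_n) : e m 0 q = (m == q.+1)%:R.
Proof.
rewrite /ebasis; case: ifP => [/andP[m0 mn]|h].
  rewrite mxE; case: m m0 mn => //= m _ _; rewrite eqSS eq_sym.
  by case: eqP.
rewrite mxE; case: eqP h => // ->; by rewrite ltn_ord.
Qed.

Lemma e0 : e 0 = 0. Proof. by rewrite /ebasis. Qed.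
Lemma eN : e N = 0. Proof. by rewrite /ebasis ltnn andbF. Qed.

Lemma dotvD c a b : dotv c (a + b) = dotv c a + dotv c b.
Proof. by rewrite /dotv -big_split; apply: eq_bigr => k _; rewrite mxE mulrDr. Qed.
Lemma dotvN c a : dotv c (- a) = - dotv c a.
Proof. by rewrite /dotv -sumrN; apply: eq_bigr => k _; rewrite mxE mulrN. Qed.
Lemma dotvB c a b : dotv c (a - b) = dotv c a - dotv c b.
Proof. by rewrite dotvD dotvN. Qed.
Lemma dotvZ c s a : dotv c (s *: a) = s * dotv c a.
Proof. by rewrite /dotv mulr_sumr; apply: eq_bigr => k _; rewrite mxE mulrCA. Qed.
Lemma dotv0 c : dotv c 0 = 0.
Proof. by rewrite /dotv big1 // => k _; rewrite mxE mulr0. Qed.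
Lemma dotv0l a : dotv 0 a = 0.
Proof. by rewrite /dotv big1 // => k _; rewrite mxE mul0r. Qed.

Definition pot (c : vec) m := dotv c (e m).
Definition u k : vec := e k.-1 - e k.
Definition cv (c : vec) k := pot c k.-1 - pot c k.
Definition mu (k : nat) : R := if k == 1%N then 2 else 1.

Lemma dotv_u c k : dotv c (u k) = cv c k.
Proof. by rewrite /u dotvB. Qed.

Lemma sum_delta (F : 'I_n -> R) (q0 : 'I_n) :
  \sum_(q < n) F q * (q == q0)%:R = F q0.
Proof.
rewrite (bigD1 q0) //= big1 ?addr0 ?eqxx ?mulr1 // => q /negbTE ->.
by rewrite mulr0.
Qed.

Lemma pot_row (P : nat -> R) m : P 0%N = 0 -> P N = 0 -> (m <= N)%N ->
  pot (\row_(q < n) P q.+1) m = P m.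
Proof.
move=> P0 PN mN; rewrite /pot /dotv.
under eq_bigr do rewrite e_coord mxE.
case: m mN => [|m] mN.
  by rewrite big1 // => q _; rewrite mulr0.
case: (ltnP m n) => mn.
  rewrite (eq_bigr (fun q : 'I_n => P q.+1 * (q == Ordinal mn)%:R)); last first.
    by move=> q _; rewrite eqSS eq_sym.
  by rewrite sum_delta.
have -> : m = n by apply/eqP; rewrite eqn_leq mn -ltnS mN.
rewrite PN big1 // => q _; rewrite eqSS; case: eqP => [qn|]; last by rewrite mulr0.
by move: (ltn_ord q); rewrite -qn ltnn.
Qed.

Lemma pot0 c : pot c 0 = 0. Proof. by rewrite /pot e0 dotv0. Qed.
Lemma potN c : pot c N = 0. Proof. by rewrite /pot eN dotv0. Qed.

Lemma edge_exists (t : nat -> R) j : (1 <= j <= N)%N ->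
  exists d, forall k, (1 <= k <= N)%N -> k != j -> cv d k = t k.
Proof.
move=> /andP[j1 jN].
pose P m := if (m < j)%N then - \sum_(1 <= l < m.+1) t l
            else \sum_(m.+1 <= l < N.+1) t l.
have P0 : P 0%N = 0 by rewrite /P j1 big_geq ?oppr0.
have PN : P N = 0 by rewrite /P ltnNge jN /= big_geq.
exists (\row_(q < n) P q.+1) => k /andP[k1 kN] kj.
rewrite /cv !pot_row // ?(leq_trans (leq_pred k)) //.
rewrite /P; case: (ltnP k j) => kj'.
  have -> : (k.-1 < j)%N by rewrite (leq_ltn_trans (leq_pred k)).
  rewrite prednK // (big_nat_recr k) //=; ring.
have jk : (j < k)%N by rewrite ltn_neqAle eq_sym kj kj'.
have -> : (k.-1 < j)%N = false by apply/negbTE; rewrite -leqNgt -ltnS prednK.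
rewrite prednK // (big_ltn (m := k)) //=; ring.
Qed.

Lemma cv_sum c : \sum_(1 <= k < N.+1) cv c k = 0.
Proof.
rewrite (@telescope_sumr_eq _ _ _ (fun k => - pot c k.-1)) //=.
  by rewrite potN pot0; ring.
by move=> k /andP[k1 _]; rewrite /cv /=; ring.
Qed.

Lemma e_mod m : (m <= N)%N -> e (m %% N) = e m.
Proof.
rewrite leq_eqVlt => /orP[/eqP->|mN]; first by rewrite modnn e0 eN.
by rewrite modn_small.
Qed.

Lemma S_char a : S_CN a <-> a = 0 \/ exists k, (1 <= k <= N)%N /\ (a = u k \/ a = - u k).
Proof.
split.
  case=> [->|[i [j [E ->]]]]; first by left.
  right; move: E => /and3P[iN jN /orP[/eqP ->|/eqP ->]].
    exists i.+1; split; first by rewrite /= iN.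
    by left; rewrite /u e_mod.
  exists j.+1; split; first by rewrite /= jN.
  by right; rewrite /u e_mod // opprB.
case=> [->|[k [/andP[k1 kN] [->|->]]]]; first by left.
  have kp : (k.-1 < N)%N by rewrite prednK.
  right; exists k.-1, (k %% N)%N; split; last by rewrite /u e_mod.
  by rewrite /cycle_edge kp ltn_pmod //= prednK // eqxx.
have kp : (k.-1 < N)%N by rewrite prednK.
right; exists (k %% N)%N, k.-1; split; last by rewrite /u e_mod // opprB.
by rewrite /cycle_edge kp ltn_pmod //= prednK // eqxx orbT.
Qed.

Lemma omega0 : omega (0 : vec) = 0.
Proof. by rewrite /omega eqxx. Qed.

Lemma omega_one a (q : 'I_n) : a 0 q != 0 -> e 1 0 q = 0 -> omega a = 1.
Proof.
move=> aq e1q; rewrite /omega.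
case: eqP => [a0|_]; first by move: aq; rewrite a0 mxE eqxx.
case: eqP => [a1|_]; first by move: aq; rewrite a1 e1q eqxx.
case: eqP => [a1|_] //; by move: aq; rewrite a1 mxE e1q oppr0 eqxx.
Qed.

Lemma e1_neq0 : (0 < n)%N -> e 1 != 0.
Proof.
move=> n0; apply/eqP => h.
have := e_coord 1 (Ordinal n0); rewrite h mxE /= => /eqP.
by rewrite eq_sym oner_eq0.
Qed.

Lemma omega_u k : (2 <= n)%N -> (1 <= k <= N)%N ->
  omega (u k) = mu k /\ omega (- u k) = mu k.
Proof.
move=> n2 /andP[k1 kN].
have n0 : (0 < n)%N by apply: leq_trans n2.
case: (eqVneq k 1%N) => [->|k1'].
  have u1 : u 1 = - e 1 by rewrite /u e0 sub0r.
  rewrite /mu eqxx u1 opprK /omega oppr_eq0 (negbTE (e1_neq0 n0)) eqxx /=.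
  by rewrite !eqxx orbT.
have k2 : (2 <= k)%N by rewrite ltn_neqAle eq_sym k1' k1.
have [q [e1q uq]] : exists q : 'I_n, e 1 0 q = 0 /\ u k 0 q != 0.
  case: (eqVneq k 2%N) => [->|k2'].
    exists (Ordinal n2); rewrite /u !mxE !e_coord /=.
    by split => //; rewrite subr_eq0 eq_sym oner_eq0.
  have k3 : (3 <= k)%N by rewrite ltn_neqAle eq_sym k2' k2.
  have lt : (k - 2 < n)%N by rewrite ltn_subLR //; apply: leq_trans kN _; rewrite addnC addn1.
  exists (Ordinal lt); rewrite /u !mxE !e_coord /=.
  have -> : (1 == (k - 2).+1)%N = false by apply/negbTE; rewrite eqSS; lia.
  have -> : (k.-1 == (k - 2).+1)%N by apply/eqP; lia.
  have -> : (k == (k - 2).+1)%N = false by apply/negbTE; apply/eqP; lia.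
  by split => //; rewrite subr0 oner_eq0.
rewrite /mu (negbTE k1'); split; apply: (omega_one (q := q)) => //.
by rewrite mxE oppr_eq0.
Qed.

Lemma hyper (b : 'I_N -> vec) d (h : R) :
  (forall r, dotv d (b r) = h) -> \det (Defs.diffmx b) != 0 -> d = 0.
Proof.
move=> Hb; apply: contraNeq => d0; rewrite -det_tr; apply/det0P; exists d => //.
apply/rowP => r; rewrite !mxE.
transitivity (dotv d (b (lift ord0 r) - b ord0)); last by rewrite dotvB !Hb subrr.
by rewrite /dotv; apply: eq_bigr => k _; rewrite !mxE.
Qed.

Lemma conv_ext (X Y : vec -> Prop) : (forall y, X y <-> Y y) ->
  forall x, conv X x <-> conv Y x.
Proof.
move=> XY x; split; case=> k [p [w [Hp Hw]]]; exists k, p, w; split => //;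
  by move=> i; apply/XY.
Qed.

Local Notation v := (vpt R n).
Definition pm1 (lam : nat -> int) :=
  forall k, (1 <= k <= N)%N -> lam k = 1 \/ lam k = -1.

Lemma vpt_u lam j : (0 < j)%N -> v lam j = (lam j)%:~R *: u j.
Proof. by rewrite /vpt; case: j. Qed.

Lemma vpt0 lam : v lam 0 = 0.
Proof. by []. Qed.

Lemma vpt_S lam j : pm1 lam -> (j <= N)%N -> S_CN (v lam j).
Proof.
move=> pm jN; apply/S_char; case: j jN => [|j] jN; first by left.
right; exists j.+1; split => //; rewrite vpt_u //.
by case: (pm j.+1) => // ->; [left; rewrite scale1r | right; rewrite scaleN1r].
Qed.

Lemma mu_pos k : 0 < mu k.
Proof. by rewrite /mu; case: ifP. Qed.

Lemma cell (c : vec) lam i : (2 <= n)%N -> pm1 lam -> (1 <= i <= N)%N ->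
  (forall k, (1 <= k <= N)%N -> k != i -> cv c k = - (lam k)%:~R * mu k) ->
  `|cv c i| < mu i ->
  [/\ forall a, S_CN a -> 0 <= dotv c a + omega a,
      forall y, (S_CN y /\ dotv c y + omega y = 0) <->
                (exists j, [/\ (j <= N)%N, j != i & y = v lam j]) &
      forall j, (j <= N)%N -> j != i -> v lam j != v lam i].
Proof.
move=> n2 pm iN Hc Hi.
have gu k : (1 <= k <= N)%N -> dotv c (u k) + omega (u k) = mu k + cv c k
    /\ dotv c (- u k) + omega (- u k) = mu k - cv c k.
  move=> kN; have [o1 o2] := omega_u n2 kN.
  by rewrite dotvN dotv_u o1 o2; split; ring.
have Hi' : - mu i < cv c i < mu i by rewrite -ltr_norml.
have mup k : 0 < mu k := mu_pos k.
have gvi : 0 < dotv c (v lam i) + omega (v lam i).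
  have i0 : (0 < i)%N by case/andP: iN.
  rewrite vpt_u //; have [g1 g2] := gu i iN; have mi := mup i.
  case: (pm i iN) => ->; first by rewrite scale1r g1; case/andP: Hi' => ? ?; lra.
  by rewrite scaleN1r g2; case/andP: Hi' => ? ?; lra.
have back y : (exists j, [/\ (j <= N)%N, j != i & y = v lam j]) ->
    S_CN y /\ dotv c y + omega y = 0.
  case=> j [jN ji ->]; split; first exact: vpt_S.
  case: j jN ji => [|j] jN ji; first by rewrite vpt0 dotv0 omega0 addr0.
  rewrite vpt_u //; have [g1 g2] := gu j.+1 jN. 
  case: (pm j.+1 jN) => E; rewrite E.
    by rewrite scale1r g1 Hc // E; ring.
  by rewrite scaleN1r g2 Hc // E; ring.
split.
- move=> a /S_char [->|[k [kN [->|->]]]]; first by rewrite dotv0 omega0 addr0.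
  + have [g1 _] := gu k kN; rewrite g1; have mk := mup k.
    case: (eqVneq k i) => [->|ki]; first by case/andP: Hi' => ? ?; lra.
    by rewrite Hc //; case: (pm k kN) => ->; lra.
  + have [_ g2] := gu k kN; rewrite g2; have mk := mup k.
    case: (eqVneq k i) => [->|ki]; first by case/andP: Hi' => ? ?; lra.
    by rewrite Hc //; case: (pm k kN) => ->; lra.
- move=> y; split; last exact: back.
  case=> /S_char [->|[k [kN [->|->]]]] g0.
  + by exists 0%N; split => //; rewrite eq_sym; case/andP: iN => ? ?; rewrite -lt0n.
  + have [g1 _] := gu k kN; rewrite g1 in g0; have mk := mup k.
    have k0 : (0 < k)%N by case/andP: kN.
    case: (eqVneq k i) => [ki|ki].
      by move: Hi'; rewrite -ki; case/andP => ? ?; lra.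
    exists k; split => //; first by case/andP: kN.
    rewrite vpt_u //; rewrite Hc // in g0.
    case: (pm k kN) => E; rewrite E; first by rewrite scale1r.
    by exfalso; move: g0; rewrite E; lra.
  + have [_ g2] := gu k kN; rewrite g2 in g0; have mk := mup k.
    have k0 : (0 < k)%N by case/andP: kN.
    case: (eqVneq k i) => [ki|ki].
      by move: Hi'; rewrite -ki; case/andP => ? ?; lra.
    exists k; split => //; first by case/andP: kN.
    rewrite vpt_u //; rewrite Hc // in g0.
    case: (pm k kN) => E; rewrite E; last by rewrite scaleN1r.
    by exfalso; move: g0; rewrite E; lra.
- move=> j jN ji; apply/eqP => E.
  have [_ g0] := back (v lam j) (ex_intro _ j (And3 jN ji erefl)).
  by move: gvi; rewrite -E g0 ltxx.
Qed.

Definition Km : 'M[R]_n := \matrix_(p, q) (((p:nat) == q.+1)%:R - (p == q)%:R).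
Definition Rm (i : nat) : 'M[R]_n :=
  \matrix_(p, q) (if (p:nat).+1 == i then -1 else (p == q)%:R).

Lemma det_Km : `|\det Km| = 1.
Proof.
rewrite det_trig; last first.
  apply/is_trig_mxP => p q pq; rewrite mxE.
  have -> : ((p:nat) == q.+1) = false by apply/negbTE; apply/eqP => E; move: pq; rewrite E ltnNge leqnSn.
  have -> : (p == q) = false by apply/negbTE; apply/eqP => E; move: pq; rewrite E ltnn.
  by rewrite subrr.
rewrite normr_prod big1 // => p _; rewrite mxE eqxx.
have -> : ((p:nat) == p.+1) = false by apply/negbTE; rewrite neq_ltn ltnSn.
by rewrite sub0r normrN normr1.
Qed.

Lemma det_Rm i : (0 < i)%N -> `|\det (Rm i)| = 1.
Proof.
move=> i0; case: (ltnP i.-1 n) => [lt|ge]; last first.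
  have -> : Rm i = 1%:M.
    apply/matrixP => p q; rewrite !mxE.
    have -> : ((p:nat).+1 == i) = false.
      apply/negbTE/eqP => E; move: ge; rewrite -E /= leqNgt ltn_ord.
      by [].
    by [].
  by rewrite det1 normr1.
set i0' := Ordinal lt.
have i1 : i = i0'.+1 by rewrite /= prednK.
rewrite (expand_det_col _ i0') (bigD1 i0') //= big1 ?addr0; last first.
  move=> p pi; rewrite mxE i1 eqSS (val_eqE p i0') (negbTE pi).
  by rewrite mul0r.
rewrite /cofactor.
have -> : row' i0' (col' i0' (Rm i)) = 1%:M.
  apply/matrixP => a b; rewrite !mxE i1 eqSS (val_eqE (lift i0' a) i0').
  by rewrite eq_sym (negbTE (neq_lift i0' a)) (inj_eq lift_inj).
rewrite mxE i1 eqxx det1 mulr1 normrM normrN1 mul1r.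
by rewrite normr_sign.
Qed.

Lemma u_coord k (q : 'I_n) : u k 0 q = ((k.-1 == q.+1)%:R - (k == q.+1)%:R).
Proof. by rewrite /u !mxE !e_coord. Qed.

Lemma sum_delta_nat (a : nat) : \sum_(x < n) ((x : nat) == a)%:R = ((a < n)%N)%:R :> R.
Proof.
case: (ltnP a n) => an.
  rewrite (eq_bigr (fun x : 'I_n => 1 * (x == Ordinal an)%:R)) ?sum_delta //.
  by move=> x _; rewrite mul1r.
rewrite big1 // => x _; case: eqP => // E; move: (ltn_ord x); rewrite E ltnNge an.
by [].
Qed.

Lemma simplex lam i : pm1 lam -> (1 <= i <= N)%N ->
  exists b : 'I_N -> vec,
  [/\ forall r, exists j, [/\ (j <= N)%N, j != i & b r = v lam j],
      forall j, (j <= N)%N -> j != i -> exists r, b r = v lam j &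
      `|\det (Defs.diffmx b)| = 1].
Proof.
move=> pm /andP[i1 iN].
pose idx (r : nat) := if r == 0%N then 0%N else if r == i then N else r.
have idxN r : (r < N)%N -> (idx r <= N)%N /\ idx r != i.
  rewrite /idx => rN; case: eqP => [_|r0]; first by split => //; rewrite eq_sym -lt0n.
  case: eqP => [ri|/eqP ri]; last by split => //; apply: ltnW.
  by split => //; apply/eqP => E; move: rN; rewrite ri -E ltnn.
exists (fun r => v lam (idx r)); split.
- move=> r; have [h1 h2] := idxN r (ltn_ord r); by exists (idx r).
- move=> j jN ji.
  case: (eqVneq j 0%N) => [->|j0]; first by exists ord0.
  case: (eqVneq j N) => [jE|jN'].
    have lt : (i < N)%N by rewrite ltn_neqAle iN andbT; rewrite -jE eq_sym.
    exists (Ordinal lt); rewrite /idx /= eqxx; have -> : (i == 0%N) = false by apply/negbTE; rewrite -lt0n.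
    by rewrite jE.
  have lt : (j < N)%N by rewrite ltn_neqAle jN' jN.
  by exists (Ordinal lt); rewrite /idx /= (negbTE j0) (negbTE ji).
pose idx' (r : nat) := if r.+1 == i then N else r.+1.
pose W : 'rV[R]_n := \row_r (lam (idx' r))%:~R.
have -> : Defs.diffmx (fun r => v lam (idx r)) = diag_mx W *m (Rm i *m Km).
  apply/matrixP => r q; rewrite mul_diag_mx !mxE.
  rewrite /idx /= subr0 /bump /= add1n.
  have -> : (if (r.+1 == i) then N else r.+1) = idx' r by [].
  have i0 : (0 < idx' r)%N by rewrite /idx'; case: ifP.
  rewrite vpt_u // mxE; congr (_ * _).
  rewrite u_coord /idx'; case: (eqVneq (r:nat).+1 i) => [ri|ri].
    rewrite (eq_bigr (fun x : 'I_n => - (((x:nat) == q.+1)%:R - (x == q)%:R))); last first.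
      by move=> x _; rewrite !mxE ri eqxx mulN1r.
    rewrite sumrN sumrB sum_delta_nat.
    rewrite (eq_bigr (fun x : 'I_n => 1 * (x == q)%:R)) ?sum_delta; last by move=> x _; rewrite mul1r.
    rewrite /=; have -> : (N == q.+1) = false.
      by apply/negbTE; rewrite eqSS; move: (ltn_ord q); rewrite ltn_neqAle eq_sym; case/andP.
    case: (ltnP q.+1 n) => qn.
      by rewrite eq_sym (ltn_eqF qn) /=; ring.
    have -> : (n == q.+1) by rewrite eqn_leq qn ltn_ord.
    by rewrite /=; ring.
  rewrite (eq_bigr (fun x : 'I_n => (((x:nat) == q.+1)%:R - (x == q)%:R) * (x == r)%:R)); last first.
    move=> x _; rewrite !mxE (negbTE ri).
    by rewrite mulrC [r == x]eq_sym.
  by rewrite sum_delta /= eqSS.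
rewrite !det_mulmx det_diag !normrM det_Km det_Rm // !mulr1 normr_prod big1 // => r _.
rewrite mxE; have : (1 <= idx' r <= N)%N.
  by rewrite /idx'; case: ifP => //= _; apply: ltnW; apply: ltn_ord.
by move=> /pm [] ->; rewrite ?normrN normr1.
Qed.

Lemma int_small2 (x : int) : `|(x%:~R : R)| < 2 -> x = 1 \/ x = 0 \/ x = -1.
Proof.
rewrite ltr_norml => /andP[h2 h1].
have : x < 2 by rewrite -(ltr_int R). have : -2 < x by rewrite -(ltr_int R). lia.
Qed.
Lemma int_small1 (x : int) : `|(x%:~R : R)| < 1 -> x = 0.
Proof.
rewrite ltr_norml => /andP[h2 h1].
have : x < 1 by rewrite -(ltr_int R). have : -1 < x by rewrite -(ltr_int R). lia.
Qed.
Lemma intr_inj' (x y : int) : (x%:~R : R) = y%:~R -> x = y.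
Proof. by move/eqP; rewrite eqr_int => /eqP. Qed.

Lemma g_u c k : (2 <= n)%N -> (1 <= k <= N)%N ->
  dotv c (u k) + omega (u k) = mu k + cv c k
  /\ dotv c (- u k) + omega (- u k) = mu k - cv c k.
Proof.
move=> n2 kN; have [o1 o2] := omega_u n2 kN.
by rewrite dotvN dotv_u o1 o2; split; ring.
Qed.

Lemma sum_mu (s : nat -> int) :
  \sum_(1 <= k < N.+1) (s k)%:~R * mu k
  = (s 1%N)%:~R + (\sum_(1 <= k < N.+1) s k)%:~R :> R.
Proof.
rewrite big_ltn // [in RHS]big_ltn // rmorphD rmorph_sum /mu /=.
have -> : \sum_(2 <= i < n.+2) (s i)%:~R * (if i == 1%N then 2 else 1)
   = \sum_(2 <= i < n.+2) (s i)%:~R :> R.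
  by apply: eq_big_nat => k /andP[k2 _]; rewrite ifN ?mulr1 // gtn_eqF.
by rewrite addrA mulr_natr mulr2n.
Qed.

Lemma delta_c lam i : pm1 lam -> \sum_(1 <= k < N.+1) lam k = 0 ->
  (1 <= i <= N)%N -> lam i = lam 1%N ->
  exists c, (forall k, (1 <= k <= N)%N -> k != i -> cv c k = - (lam k)%:~R * mu k)
            /\ `|cv c i| < mu i.
Proof.
move=> pm sum0 iN li.
have [c Hc] := edge_exists (fun k => - (lam k)%:~R * mu k) iN.
exists c; split => //.
have := cv_sum c.
have iN' : (1 <= i < N.+1)%N by rewrite ltnS.
have SW := @sum_swap1 _ (cv c) (fun k => - (lam k)%:~R * mu k) 1 N.+1 i iN'.
rewrite SW; last first.
  move=> k /andP[k1 k2] ki; apply: Hc => //.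
  by rewrite k1.
have -> : \sum_(1 <= k < N.+1) - (lam k)%:~R * mu k = - \sum_(1 <= k < N.+1) (lam k)%:~R * mu k.
  by rewrite -sumrN; apply: eq_bigr => k _; rewrite mulNr.
rewrite sum_mu sum0 li => E.
have E' : cv c i = (lam 1%N)%:~R * (1 - mu i).
  rewrite mulrBr mulr1; apply/eqP; rewrite -subr_eq0; apply/eqP; rewrite -E; ring.
have l1 : (1 <= 1 <= N)%N by [].
rewrite E' /mu; case: ifP => _; case: (pm 1%N l1) => ->;
  rewrite ltr_norml; apply/andP; split; lra.
Qed.

Lemma Vdiff lam i : (forall j, (j <= N)%N -> j != i -> v lam j != v lam i) ->
  forall y, (exists j, [/\ (j <= N)%N, j != i & y = v lam j]) <-> (V_N lam y /\ y <> v lam i).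
Proof.
move=> Hn y; split.
  case=> j [jN ji ->]; split; first by exists j.
  by apply/eqP; apply: Hn.
case=> [[j [jN ->]] yn]; exists j; split => //.
by apply/eqP => ji; apply: yn; rewrite ji.
Qed.

Lemma forward (C : vec -> Prop) : (2 <= n)%N -> odd n -> regular_subdivision_cell C -> Delta_cell C.
Proof.
move=> n2 nodd [c [h [Hmin]]] /= [Hfd HC].
set F := fun a => S_CN a /\ dotv c a + omega a = h in Hfd HC.
have gu k := @g_u c k n2.
have h0 : h <= 0.
  by have := Hmin 0 (or_introl erefl); rewrite dotv0 omega0 addr0.
have low k : (1 <= k <= N)%N -> h <= mu k + cv c k /\ h <= mu k - cv c k.
  move=> kN; have [g1 g2] := gu k kN.
  have S1 : S_CN (u k) by apply/S_char; right; exists k; split => //; left.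
  have S2 : S_CN (- u k) by apply/S_char; right; exists k; split => //; right.
  by split; [rewrite -g1 | rewrite -g2]; apply: Hmin.
pose s k : int := if 0 < cv c k then -1 else 1.
have spm k : s k = 1 \/ s k = -1 by rewrite /s; case: ifP; auto.
have sg k : (s k)%:~R * cv c k = - `|cv c k|.
  rewrite /s; case: (ltrP 0 (cv c k)) => H.
    by rewrite gtr0_norm // mulN1r.
  by rewrite ler0_norm // opprK mul1r.
have ss k : (s k)%:~R * (s k)%:~R = 1 :> R.
  by case: (spm k) => ->; rewrite /= ?mulN1r ?opprK ?mulr1.
have mup := mu_pos.
have ClaimA : forall y, F y -> (y = 0 /\ h = 0) \/
    exists k, [/\ (1 <= k <= N)%N, y = (s k)%:~R *: u k & mu k - `|cv c k| = h].
  move=> y [/S_char [->|[k [kN [->|->]]]] Hy].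
  - by left; split => //; rewrite dotv0 omega0 addr0 in Hy.
  - right; exists k; have [g1 _] := gu k kN; rewrite g1 in Hy.
    have [l1 l2] := low k kN; have mk := mup k.
    rewrite /s; case: (ltrP 0 (cv c k)) => H; first by exfalso; lra.
    by split => //; [rewrite scale1r | rewrite ler0_norm //; lra].
  - right; exists k; have [_ g2] := gu k kN; rewrite g2 in Hy.
    have [l1 l2] := low k kN; have mk := mup k.
    rewrite /s; case: (ltrP 0 (cv c k)) => H; last by exfalso; lra.
    by split => //; [rewrite scaleN1r | rewrite gtr0_norm //].
have [b [Hb Hdet]] := Hfd.
have hz : h = 0.
  apply/eqP; rewrite eq_le h0 /= leNgt; apply/negP => hneg.
  have allk : forall k, (1 <= k <= N)%N -> mu k - `|cv c k| = h.
    move=> k kN; apply/eqP; apply/negPn/negP => hk.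
    have [d Hd] := edge_exists (fun k => (s k)%:~R) kN.
    have H1 : forall r, dotv d (b r) = 1.
      move=> r; case: (ClaimA _ (Hb r)) => [[_ h0']|[k' [k'N -> Hk']]].
        by exfalso; move: hneg; rewrite h0' ltxx.
      rewrite dotvZ dotv_u Hd ?ss //.
      by apply/eqP => E; move: hk; rewrite -E Hk' eqxx.
    have d0 := hyper H1 Hdet.
    by move: (H1 ord0); rewrite d0 dotv0l => /eqP; rewrite eq_sym oner_eq0.
  have cvk k : (1 <= k <= N)%N -> cv c k = (s k)%:~R * (h - mu k).
    move=> kN; have e1 : (s k)%:~R * cv c k = h - mu k by rewrite sg -(allk k kN); ring.
    by have := congr1 (fun x => (s k)%:~R * x) e1; rewrite /= mulrA ss mul1r.
  have := cv_sum c.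
  have -> : \sum_(1 <= k < N.+1) cv c k =
      \sum_(1 <= k < N.+1) (h * (s k)%:~R - (s k)%:~R * mu k).
    apply: eq_big_nat => k /andP[k1 k2]; rewrite cvk; first ring.
    by rewrite k1.
  rewrite sumrB -mulr_sumr sum_mu -rmorph_sum.
  set S := \sum_(1 <= k < N.+1) s k => E.
  have E2 : (h - 1) * S%:~R = (s 1%N)%:~R by rewrite -[LHS]subr0 -E; ring.
  have : S = 0 \/ 1 <= S \/ S <= -1 by lia.
  case=> [S0|[S1|S1]].
  - by move: E2; rewrite S0 mulr0; case: (spm 1%N) => ->; lra.
  - have S1' : 1 <= (S%:~R : R) by rewrite (ler_int R 1).
    have : (h - 1) * (S%:~R - 1) <= 0 by apply: mulr_le0_ge0; lra.
    by case: (spm 1%N) E2 => -> E2; lra.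
  - have S1' : (S%:~R : R) <= -1 by rewrite (ler_int R _ (-1)).
    have : 0 <= (h - 1) * (S%:~R + 1) by apply: mulr_le0; lra.
    by case: (spm 1%N) E2 => -> E2; lra.
subst h.
have bnd k : (1 <= k <= N)%N -> `|cv c k| <= mu k.
  by move=> kN; have [l1 l2] := low k kN; rewrite ler_norml; apply/andP; split; lra.
have atmost j1 j2 : (1 <= j1 <= N)%N -> (1 <= j2 <= N)%N -> j1 != j2 ->
    mu j1 - `|cv c j1| = 0 \/ mu j2 - `|cv c j2| = 0.
  move=> j1N j2N j12.
  case: (eqVneq (mu j1 - `|cv c j1|) 0) => [->|h1]; first by left.
  case: (eqVneq (mu j2 - `|cv c j2|) 0) => [->|h2]; first by right.
  exfalso.
  have [d Hd] := edge_exists (fun k => (k == j1)%:R) j2N.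
  have H1 : forall r, dotv d (b r) = 0.
    move=> r; case: (ClaimA _ (Hb r)) => [[-> _]|[k' [k'N -> Hk']]]; first by rewrite dotv0.
    rewrite dotvZ dotv_u Hd //.
      have -> : (k' == j1) = false by apply/negbTE/eqP => E; move: h1; rewrite -E Hk' eqxx.
      by rewrite mulr0.
    by apply/eqP => E; move: h2; rewrite -E Hk' eqxx.
  have d0 := hyper H1 Hdet.
  have := Hd j1 j1N j12; rewrite d0 /cv /pot !dotv0l eqxx subrr => /eqP.
  by rewrite eq_sym oner_eq0.
have cvG k : (1 <= k <= N)%N -> mu k - `|cv c k| = 0 -> cv c k = - (s k)%:~R * mu k.
  move=> kN E; have e1 : (s k)%:~R * cv c k = - mu k by rewrite sg; lra.
  by have := congr1 (fun x => (s k)%:~R * x) e1; rewrite /= mulrA ss mul1r => ->; ring.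
pose T := \sum_(2 <= k < N.+1) s k.
have [q Tq] : exists q : int, T = n%:Z + 2 * q.
  have := @parity s 2 n; rewrite /T (_ : (2 + n)%N = N.+1); last by rewrite add2n.
  by apply => k /andP[_ _]; apply: spm.
have nodd' : exists p, n = (2 * p).+1.
  exists n./2; have := odd_double_half n; rewrite nodd -muln2 mulnC add1n; by move=> ->.
have [p np] := nodd'.
have Ssplit : \sum_(1 <= k < N.+1) s k = s 1%N + T by rewrite big_ltn.
case: (classic (exists i, (1 <= i <= N)%N /\ mu i - `|cv c i| <> 0)) => [[i [iN hi]]|none]; last first.
  exfalso.
  have allk k : (1 <= k <= N)%N -> mu k - `|cv c k| = 0.
    move=> kN; case: (eqVneq (mu k - `|cv c k|) 0) => // hk.
    by exfalso; apply: none; exists k; split => //; apply/eqP.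
  have := cv_sum c.
  have -> : \sum_(1 <= k < N.+1) cv c k = \sum_(1 <= k < N.+1) - ((s k)%:~R * mu k).
    apply: eq_big_nat => k /andP[k1 k2]; rewrite cvG ?mulNr //; first by rewrite k1.
    by rewrite allk // k1.
  rewrite sumrN sum_mu -rmorphD /= => /eqP; rewrite oppr_eq0 (eqr_int R _ 0) Ssplit Tq => /eqP.
  by case: (spm 1%N) => ->; lia.
have others k : (1 <= k <= N)%N -> k != i -> mu k - `|cv c k| = 0.
  by move=> kN ki; case: (atmost k i kN iN ki) => // /hi.
have hi' : `|cv c i| < mu i.
  by rewrite lt_neqAle bnd // andbT; apply/eqP => E; apply: hi; rewrite E subrr.
pose S := \sum_(1 <= k < N.+1) s k.
pose lam k := if k == i then s i - S else s k.
have cvi : cv c i = (s 1%N + S - s i * (if i == 1%N then 2 else 1))%:~R.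
  have := cv_sum c.
  have iN' : (1 <= i < N.+1)%N by rewrite ltnS.
  have SW := @sum_swap1 _ (cv c) (fun k => - ((s k)%:~R * mu k)) 1 N.+1 i iN'.
  rewrite SW; last first.
    move=> k /andP[k1 k2] ki; rewrite cvG ?mulNr //; first by rewrite k1.
    by rewrite others // k1.
  rewrite sumrN sum_mu /mu => E.
  rewrite rmorphB rmorphD rmorphM /=.
  case: ifP E => _ E; rewrite /=; lra.
have lami : lam i = lam 1%N /\ (lam i = 1 \/ lam i = -1).
  rewrite /lam eqxx; case: (eqVneq i 1%N) => [i1|i1].
    split => //.
    move: hi'; rewrite cvi i1 /mu eqxx => /int_small2.
    rewrite /S Ssplit Tq; case: (spm 1%N) => ->; lia.
  move: hi'; rewrite cvi /mu (negbTE i1) => /int_small1.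
  by case: (spm 1%N) => ->; case: (spm i) => ->; rewrite /S => ?; split; lia.
have pm : pm1 lam.
  move=> k kN; rewrite /lam.
  have [E|E] := eqVneq k i; last by apply: spm.
  by case: lami => _; rewrite /lam eqxx.
have sumlam : \sum_(1 <= k < N.+1) lam k = 0.
  have iN' : (1 <= i < N.+1)%N by rewrite ltnS.
  rewrite (@sum_swap1 _ lam s 1 N.+1 i iN'); last first.
    by move=> k _ ki; rewrite /lam (negbTE ki).
  rewrite /lam eqxx -/S; lia.
have Hc : forall k, (1 <= k <= N)%N -> k != i -> cv c k = - (lam k)%:~R * mu k.
  move=> k kN ki; rewrite /lam (negbTE ki) cvG // //.
  exact: others.
have [Hmin' HF Hneq] := cell n2 pm iN Hc hi'.
exists lam; split; first by split.
exists i; split => //; first by case: lami.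
move=> x; rewrite HC; apply: conv_ext => y.
rewrite /F; rewrite HF; exact: Vdiff.
Qed.

End Work.

Theorem theorem5p5 (R : realType) (n : nat) :
  (4 <= n.+1)%N -> ~~ odd n.+1 ->
  (forall C : 'rV[R]_n -> Prop,
     regular_subdivision_cell C <-> Delta_cell C) /\
  (forall C : 'rV[R]_n -> Prop,
     regular_subdivision_cell C -> unimodular_simplex_in_S C).
Proof.
move=> n4 nev.
have n2 : (2 <= n)%N by rewrite -ltnS; apply: leq_trans n4.
have nodd : odd n by move: nev; rewrite /= negbK.
have rev : forall C : 'rV[R]_n -> Prop, Delta_cell C -> regular_subdivision_cell C.
  move=> C [lam [[pm sum0] [i [iN li HC]]]].
  have [c [Hc hi]] := @delta_c R n _ _ pm sum0 iN li.
  have [Hmin HF Hneq] := @cell R n _ _ _ n2 pm iN Hc hi.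
  have [b [Hb1 Hb2 Hdet]] := @simplex R n _ _ pm iN.
  exists c, 0; split => //=; split.
    exists b; split.
      by move=> r; apply/HF; exact: Hb1 r.
    by apply/eqP => E; move: Hdet; rewrite E normr0 => /eqP; rewrite eq_sym oner_eq0.
  move=> x; apply: (iff_trans (HC x)); apply: conv_ext => y.
  exact: (iff_trans (iff_sym (@Vdiff R n _ _ Hneq y)) (iff_sym (HF y))).
split.
  by move=> C; split; [exact: (@forward R n C n2 nodd) | exact: rev].
move=> C /(@forward R n C n2 nodd) [lam [[pm sum0] [i [iN li HC]]]].
have [c [Hc hi]] := @delta_c R n _ _ pm sum0 iN li.
have [_ _ Hneq] := @cell R n _ _ _ n2 pm iN Hc hi.
have [b [Hb1 Hb2 Hdet]] := @simplex R n _ _ pm iN.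
exists b; split.
  by move=> r; have [j [jN _ ->]] := Hb1 r; exact: vpt_S.
split => //.
move=> x; apply: (iff_trans (HC x)); apply: conv_ext => y.
apply: (iff_trans (iff_sym (@Vdiff R n _ _ Hneq y))); split.
  by case=> j [jN ji ->]; have [r Hr] := Hb2 j jN ji; exists r.
by case=> r ->; exact: Hb1 r.
Qed.
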